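(* Let $t=(t_1,\dots,t_n)$ be nonnegative reals and $D_1,\dots,D_n\in\mathcal{H}_d$ positive semidefinite. Then for any $T_1\ge|t|_1$ and any $T_\infty>0$ with $T_\infty\ge|t|_\infty$, \[ \Big\|\sum_{i=1}^nt_iD_i\Big\|\le T_\infty\cdot\sup\Big\{\Big\|\sum_{i\in\mathcal{I}}D_i\Big\|:\ \mathcal{I}\subset[n],\ |\mathcal{I}|\le\lceil T_1/T_\infty\rceil\Big\}. \]
   Context: $\mathcal{H}_d$ is the space of $d\times d$ Hermitian matrices, $\|\cdot\|$ the operator norm, $|t|_1=\sum_i|t_i|$, $|t|_\infty=\max_i|t_i|$. *)

(* Defs.v *)
From HB Require Import structures.
From mathcomp Require Import all_boot all_order all_algebra.
From mathcomp Require Import complex.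
From mathcomp Require Import boolp classical_sets reals.
Set Implicit Arguments. Unset Strict Implicit. Unset Printing Implicit Defensive.
Import Order.TTheory GRing.Theory Num.Theory.
Local Open Scope ring_scope.
Local Open Scope complex_scope.

Definition vnorm (R : realType) (d : nat) (v : 'cV[R[i]]_d) : R :=
  Num.sqrt (\sum_(k < d) (complex.Re (v k 0) ^+ 2 + complex.Im (v k 0) ^+ 2)).

Definition opnorm (R : realType) (d : nat) (A : 'M[R[i]]_d) : R :=
  sup [set vnorm (A *m v) | v in [set v : 'cV[R[i]]_d | vnorm v <= 1]].

Definition hermitian (R : realType) (d : nat) (A : 'M[R[i]]_d) : Prop :=
  forall i j, A j i = (A i j)^*.

Definition psd (R : realType) (d : nat) (A : 'M[R[i]]_d) : Prop :=
  hermitian A /\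
  forall v : 'cV[R[i]]_d,
    0 <= \sum_(i < d) \sum_(j < d) (v i 0)^* * A i j * v j 0.

Definition l1norm (R : realType) (n : nat) (t : 'I_n -> R) : R :=
  \sum_(i < n) `|t i|.
Definition linfnorm (R : realType) (n : nat) (t : 'I_n -> R) : R :=
  \big[Num.max/0]_(i < n) `|t i|.

(* Main.v *)
Require Import Defs.
From HB Require Import structures.
From mathcomp Require Import all_boot all_order all_algebra.
From mathcomp Require Import complex.
From mathcomp Require Import boolp classical_sets reals.
From mathcomp Require Import ring lra.
Import Order.TTheory GRing.Theory Num.Theory.
Local Open Scope ring_scope.
Local Open Scope complex_scope.



Lemma bigmax_le' (R : realType) n (a : 'I_n -> R) (b : R) (P : pred 'I_n) :
  0 <= b -> (forall k, P k -> a k <= b) -> \big[Num.max/0]_(k | P k) a k <= b.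
Proof. move=> h1 h2. apply/bigmax_leP. split => //. Qed.

Lemma greedy (R : realType) n (a s : 'I_n -> R) (m : nat) :
  (forall k, 0 <= a k) -> (forall k, 0 <= s k <= 1) -> \sum_k s k <= m%:R ->
  exists I : {set 'I_n}, (#|I| <= m)%N /\ \sum_k s k * a k <= \sum_(k in I) a k.
Proof.
move=> a0 s01 sm.
have P0 : (#|(finset.set0 : {set 'I_n})| <= m)%N by rewrite cards0.
case: (@arg_maxP _ R _ finset.set0 (fun I : {set 'I_n} => (#|I| <= m)%N)
         (fun I => \sum_(k in I) a k) P0) => I HI Hmax.
exists I; split => //.
have key : \sum_(k | k \notin I) s k * a k <= \sum_(k in I) (1 - s k) * a k.
  have [lt|ge] := ltnP #|I| m.
  - have ak0 : forall k, k \notin I -> a k = 0.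
      move=> k kI; apply/eqP; rewrite eq_le a0 andbT.
      have := Hmax (k |: I); rewrite cardsU1 kI add1n => /(_ lt).
      rewrite big_setU1 //= => h; lra.
    rewrite (eq_bigr (fun _ => 0)); last by move=> k /ak0 ->; rewrite mulr0.
    rewrite big1_eq; apply: sumr_ge0 => k _; apply: mulr_ge0 => //.
    by have := s01 k; rewrite subr_ge0 => /andP[].
  - have eqm : #|I| = m by apply/eqP; rewrite eqn_leq HI ge.
    have swap : forall k j, k \notin I -> j \in I -> a k <= a j.
      move=> k j kI jI.
      have := Hmax (k |: (I :\ j)).
      have cJ : #|k |: (I :\ j)| = #|I|.
        rewrite cardsU1 !inE negb_and kI orbT add1n.
        by rewrite (cardsD1 j I) jI add1n.
      rewrite cJ => /(_ HI).
      rewrite big_setU1 ?inE ?negb_and ?kI ?orbT //= (big_setD1 j jI) /=.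
      by rewrite lerD2r.
    have [th [th1 [th2 th0]]] : exists th, (forall k, k \notin I -> a k <= th) /\
        (forall j, j \in I -> th <= a j) /\ 0 <= th.
      exists (\big[Num.max/0]_(k | k \notin I) a k); split; last split.
      - by move=> k kI; apply: (le_bigmax_cond _ (P := fun k => k \notin I)).
      - move=> j jI; apply: (@bigmax_le' R n a (a j) (fun k => k \notin I) (a0 j)) => k kI; exact: swap.
      - apply: (big_ind (fun x => 0 <= x)) => // x y hx hy; by rewrite le_max hx.
    apply: (@le_trans _ _ (\sum_(k | k \notin I) s k * th)).
      apply: ler_sum => k kI; apply: ler_wpM2l; first by have /andP[] := s01 k.
      exact: th1.
    apply: (@le_trans _ _ (\sum_(k in I) (1 - s k) * th)); last first.
      apply: ler_sum => k kI; apply: ler_wpM2l; last exact: th2.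
      by have := s01 k; rewrite subr_ge0 => /andP[].
    rewrite -!mulr_suml; apply: ler_wpM2r => //.
    rewrite sumrB sumr_const eqm.
    move: sm; rewrite (bigID (fun k => k \in I)) /=.
    rewrite (eq_bigl (fun k => k \in I)) //.
    lra.
rewrite (bigID (fun k => k \in I)) /=.
rewrite [X in _ <= X](eq_bigr (fun k => s k * a k + (1 - s k) * a k)); last first.
  by move=> k _; ring.
rewrite big_split /= lerD2l.
rewrite (eq_bigl (fun k => k \notin I)) //.
Qed.

Section Mx.
Variable R : realType.
Variable d : nat.
Local Notation cj := (@conjc R).
Implicit Types (u v w x y : 'cV[R[i]]_d) (A B : 'M[R[i]]_d).

Definition N2 v : R := \sum_(k < d) (complex.Re (v k 0) ^+ 2 + complex.Im (v k 0) ^+ 2).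
Definition ip u w : R[i] := \sum_(k < d) (cj (u k 0)) * w k 0.
Definition Q A u w : R[i] := \sum_(i < d) \sum_(j < d) (cj (u i 0)) * A i j * w j 0.

Lemma ReD (x y : R[i]) : complex.Re (x + y) = complex.Re x + complex.Re y.
Proof. by case: x; case: y. Qed.
Lemma ReN (x : R[i]) : complex.Re (- x) = - complex.Re x.
Proof. by case: x. Qed.
Lemma ReB (x y : R[i]) : complex.Re (x - y) = complex.Re x - complex.Re y.
Proof. by rewrite ReD ReN. Qed.
Lemma Re0 : complex.Re (0 : R[i]) = 0. Proof. by []. Qed.
Lemma Re_sum (I : Type) (r : seq I) (P : pred I) (F : I -> R[i]) :
  complex.Re (\sum_(i <- r | P i) F i) = \sum_(i <- r | P i) complex.Re (F i).
Proof. exact: (big_morph _ ReD Re0). Qed.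
Lemma ReMc (c : R) (z : R[i]) : complex.Re (c%:C * z) = c * complex.Re z.
Proof. by case: z => a b /=; rewrite mul0r subr0. Qed.
Lemma ImMc (c : R) (z : R[i]) : complex.Im (c%:C * z) = c * complex.Im z.
Proof. by case: z => a b /=; rewrite mul0r addr0. Qed.
Lemma Re_conj (z : R[i]) : complex.Re (cj z) = complex.Re z.
Proof. by case: z. Qed.
Lemma Re_conjM (z w : R[i]) : complex.Re ((cj z) * w) = complex.Re z * complex.Re w + complex.Im z * complex.Im w.
Proof. case: z => a b; case: w => c e /=. ring. Qed.

Lemma conjMc (c : R) (z : R[i]) : (cj (c%:C * z)) = c%:C * (cj z).
Proof. case: z => a b /=. congr Complex; ring. Qed.
Lemma conjM' (x z : R[i]) : (cj (x * z)) = (cj x) * (cj z).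
Proof. case: z => a b; case: x => p q /=. congr Complex; ring. Qed.
Lemma conjD' (x z : R[i]) : (cj (x + z)) = (cj x) + (cj z).
Proof. case: z => a b; case: x => p q /=. congr Complex; ring. Qed.
Lemma conjB' (x z : R[i]) : (cj (x - z)) = (cj x) - (cj z).
Proof. case: z => a b; case: x => p q /=. congr Complex; ring. Qed.
Lemma conjK' (x : R[i]) : (cj ((cj x))) = x.
Proof. case: x => p q /=. congr Complex; ring. Qed.
Lemma conj0' : (cj (0 : R[i])) = 0.
Proof. by apply/eqP; rewrite eq_complex /= oppr0 !eqxx. Qed.
Lemma conj_sum (I : Type) (r : seq I) (P : pred I) (F : I -> R[i]) :
  (cj (\sum_(i <- r | P i) F i)) = \sum_(i <- r | P i) (cj (F i)).
Proof. exact: (big_morph _ conjD' conj0'). Qed.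

Lemma vnormE v : vnorm v = Num.sqrt (N2 v).
Proof. by []. Qed.
Lemma N2_ge0 v : 0 <= N2 v.
Proof. by apply: sumr_ge0 => k _; apply: addr_ge0; apply: sqr_ge0. Qed.
Lemma Re_ip u w : complex.Re (ip u w) = \sum_(k < d) (complex.Re (u k 0) * complex.Re (w k 0) + complex.Im (u k 0) * complex.Im (w k 0)).
Proof. by rewrite Re_sum; apply: eq_bigr => k _; rewrite Re_conjM. Qed.
Lemma Re_ip_self v : complex.Re (ip v v) = N2 v.
Proof. by rewrite Re_ip; apply: eq_bigr => k _; rewrite !expr2. Qed.
Lemma N2Z (c : R) v : N2 (c%:C *: v) = c ^+ 2 * N2 v.
Proof.
rewrite /N2 mulr_sumr; apply: eq_bigr => k _; rewrite mxE ReMc ImMc; ring.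
Qed.
Lemma vnormZ (c : R) v : vnorm (c%:C *: v) = `|c| * vnorm v.
Proof. by rewrite !vnormE N2Z sqrtrM ?sqr_ge0 // sqrtr_sqr. Qed.

Lemma N2_eq0 v : N2 v = 0 -> v = 0.
Proof.
move=> h; apply/matrixP => k l; rewrite (ord1 l) mxE.
have hk := psumr_eq0P (fun k _ => addr_ge0 (sqr_ge0 (complex.Re (v k 0))) (sqr_ge0 (complex.Im (v k 0)))) h (erefl true : (fun _ => true) k).
move/eqP: hk; rewrite paddr_eq0 ?sqr_ge0 // !sqrf_eq0 => /andP[/eqP a /eqP b].
by move: a b; case: (v k 0) => p q /= -> ->.
Qed.

Lemma QE A u w : Q A u w = ip u (A *m w).
Proof.
rewrite /Q /ip; apply: eq_bigr => i _; rewrite mxE mulr_sumr.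
by apply: eq_bigr => j _; rewrite mulrA.
Qed.

Lemma QBl A u v w : Q A (u - v) w = Q A u w - Q A v w.
Proof.
rewrite /Q -sumrB; apply: eq_bigr => i _; rewrite -sumrB; apply: eq_bigr => j _.
rewrite !mxE conjB'; ring.
Qed.
Lemma QBr A u v w : Q A u (v - w) = Q A u v - Q A u w.
Proof.
rewrite /Q -sumrB; apply: eq_bigr => i _; rewrite -sumrB; apply: eq_bigr => j _.
rewrite !mxE; ring.
Qed.
Lemma QZr A (c : R) u w : Q A u (c%:C *: w) = c%:C * Q A u w.
Proof.
rewrite /Q mulr_sumr; apply: eq_bigr => i _; rewrite mulr_sumr; apply: eq_bigr => j _.
rewrite !mxE; ring.
Qed.
Lemma QZl A (c : R) u w : Q A (c%:C *: u) w = c%:C * Q A u w.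
Proof.
rewrite /Q mulr_sumr; apply: eq_bigr => i _; rewrite mulr_sumr; apply: eq_bigr => j _.
rewrite !mxE conjMc; ring.
Qed.
Lemma QD A B u w : Q (A + B) u w = Q A u w + Q B u w.
Proof.
rewrite /Q -big_split; apply: eq_bigr => i _; rewrite -big_split; apply: eq_bigr => j _.
by rewrite !mxE mulrDr mulrDl.
Qed.
Lemma Q0 u w : Q 0 u w = 0.
Proof.
rewrite /Q big1 // => i _; rewrite big1 // => j _; by rewrite mxE mulr0 mul0r.
Qed.
Lemma QsumA (I : Type) (r : seq I) (P : pred I) (F : I -> 'M[R[i]]_d) u w :
  Q (\sum_(k <- r | P k) F k) u w = \sum_(k <- r | P k) Q (F k) u w.
Proof. exact: (big_morph (fun A => Q A u w) (fun A B => QD A B u w) (Q0 u w)). Qed.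
Lemma QZA (c : R[i]) A u w : Q (c *: A) u w = c * Q A u w.
Proof.
rewrite /Q mulr_sumr; apply: eq_bigr => i _; rewrite mulr_sumr; apply: eq_bigr => j _.
rewrite !mxE; ring.
Qed.

Lemma Q_herm A u w : Defs.hermitian A -> Q A w u = (cj (Q A u w)).
Proof.
move=> hA; rewrite /Q conj_sum exchange_big /=.
apply: eq_bigr => i _; rewrite conj_sum; apply: eq_bigr => j _.
rewrite !conjM' conjK' -hA; ring.
Qed.

Lemma ReQ_sym A u w : Defs.hermitian A -> complex.Re (Q A w u) = complex.Re (Q A u w).
Proof. by move=> hA; rewrite Q_herm // Re_conj. Qed.

Lemma psd_Re A v : psd A -> 0 <= complex.Re (Q A v v).
Proof. by case=> _ /(_ v); rewrite lecE /= => /andP[]. Qed.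


Lemma key2 A u w : Defs.hermitian A -> (forall y, 0 <= complex.Re (Q A y y)) ->
  2 * complex.Re (Q A u w) <= complex.Re (Q A u u) + complex.Re (Q A w w).
Proof.
move=> hA pos; have := pos (u - w).
rewrite QBl !QBr !ReB (@ReQ_sym A u w hA); lra.
Qed.

Lemma step2 A l x : Defs.hermitian A -> (forall y, 0 <= complex.Re (Q A y y)) ->
  (forall y, complex.Re (Q A y y) <= l * N2 y) -> 0 <= l ->
  N2 (A *m x) <= l ^+ 2 * N2 x.
Proof.
move=> hA pos bnd l0.
set y := A *m x.
have K : forall c : R, 2 * (c * N2 y) <= complex.Re (Q A y y) + c * (c * complex.Re (Q A x x)).
  move=> c; have := key2 A y (c%:C *: x) hA pos.
  by rewrite QZr QZl QZr !ReMc QE Re_ip_self.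
have hy := bnd y; have hx := bnd x.
have [l_eq0|l_gt0] : l = 0 \/ 0 < l.
  by move: l0; rewrite le_eqVlt => /orP[/eqP<-|]; auto.
- move: (K 1) hy hx; rewrite l_eq0 => K1 hy' hx'.
  have := N2_ge0 x; lra.
- have h1 : l * (l * complex.Re (Q A x x)) <= l * (l * (l * N2 x)).
    by apply: ler_wpM2l => //; apply: ler_wpM2l.
  have h2 : l * N2 y <= l * (l ^+ 2 * N2 x).
    have := K l; rewrite expr2; lra.
  by rewrite ler_pM2l // in h2.
Qed.

Lemma N2_0 : N2 0 = 0.
Proof. by rewrite /N2 big1 // => k _; rewrite mxE /= expr2 mulr0 addr0. Qed.

Lemma vnorm0 : vnorm (0 : 'cV[R[i]]_d) = 0.
Proof. by rewrite vnormE N2_0 sqrtr0. Qed.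

Lemma N2_le1 v : vnorm v <= 1 -> N2 v <= 1.
Proof.
move=> h; have : Num.sqrt (N2 v) <= Num.sqrt 1 by rewrite sqrtr1.
by rewrite ler_sqrt.
Qed.

Lemma ReM (x z : R[i]) : complex.Re (x * z) = complex.Re x * complex.Re z - complex.Im x * complex.Im z.
Proof. by case: x => a b; case: z => c e. Qed.
Lemma ImM (x z : R[i]) : complex.Im (x * z) = complex.Re x * complex.Im z + complex.Im x * complex.Re z.
Proof. by case: x => a b; case: z => c e. Qed.
Lemma ImD (x y : R[i]) : complex.Im (x + y) = complex.Im x + complex.Im y.
Proof. by case: x; case: y. Qed.
Lemma Im0 : complex.Im (0 : R[i]) = 0. Proof. by []. Qed.
Lemma Im_sum (I : Type) (r : seq I) (P : pred I) (F : I -> R[i]) :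
  complex.Im (\sum_(i <- r | P i) F i) = \sum_(i <- r | P i) complex.Im (F i).
Proof. exact: (big_morph _ ImD Im0). Qed.

Lemma norm_le1 (a : R) : a ^+ 2 <= 1 -> `|a| <= 1.
Proof. by move=> h; rewrite -sqrtr_sqr -sqrtr1; apply: ler_wsqrtr. Qed.

Lemma sq_le (a c : R) : `|a| <= c -> a ^+ 2 <= c ^+ 2.
Proof.
move=> h; rewrite -(real_normK (num_real a)).
have := normr_ge0 a; nra.
Qed.

Lemma bound A : exists K, forall v, N2 v <= 1 -> N2 (A *m v) <= K.
Proof.
pose c i := \sum_j (`|complex.Re (A i j)| + `|complex.Im (A i j)|).
exists (\sum_i (c i ^+ 2 + c i ^+ 2)) => v hv.
have comp : forall j, `|complex.Re (v j 0)| <= 1 /\ `|complex.Im (v j 0)| <= 1.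
  move=> j.
  have t : complex.Re (v j 0) ^+ 2 + complex.Im (v j 0) ^+ 2 <= N2 v.
    rewrite /N2 (bigD1 j) //= lerDl; apply: sumr_ge0 => k _.
    by apply: addr_ge0; apply: sqr_ge0.
  have := sqr_ge0 (complex.Re (v j 0)); have := sqr_ge0 (complex.Im (v j 0)).
  by move=> h1 h2; split; apply: norm_le1; lra.
have term : forall i j (a b : R), `|a| <= 1 -> `|b| <= 1 ->
    `|complex.Re (A i j) * a| + `|complex.Im (A i j) * b| <=
    `|complex.Re (A i j)| + `|complex.Im (A i j)|.
  move=> i j a b ha hb; rewrite !normrM; apply: lerD; apply: ler_piMr => //.
apply: ler_sum => i _; apply: lerD; apply: sq_le; rewrite mxE.
- rewrite Re_sum; apply: (le_trans (ler_norm_sum _ _ _)); apply: ler_sum => j _.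
  rewrite ReM; apply: (le_trans (ler_normB _ _)).
  by case: (comp j) => h1 h2; apply: term.
- rewrite Im_sum; apply: (le_trans (ler_norm_sum _ _ _)); apply: ler_sum => j _.
  rewrite ImM; apply: (le_trans (ler_normD _ _)).
  by case: (comp j) => h1 h2; apply: term.
Qed.

Lemma opnorm_ub A v : vnorm v <= 1 -> vnorm (A *m v) <= opnorm A.
Proof.
move=> hv; have [K hK] := bound A.
have hub : has_ubound [set vnorm (A *m v) | v in [set v : 'cV[R[i]]_d | vnorm v <= 1]].
  exists (Num.sqrt K) => y [w hw <-]; rewrite vnormE; apply: ler_wsqrtr.
  by apply: hK; apply: N2_le1.
by apply: (ub_le_sup hub); exists v.
Qed.

Lemma opnorm_ge0 A : 0 <= opnorm A.
Proof.
have := @opnorm_ub A 0; rewrite vnorm0 mulmx0 vnorm0; apply; exact: ler01.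
Qed.

Lemma opnorm_scale A v : vnorm (A *m v) <= opnorm A * vnorm v.
Proof.
have r0 : 0 <= vnorm v by apply: sqrtr_ge0.
have [r_eq0|r_gt0] : vnorm v = 0 \/ 0 < vnorm v.
  by move: r0; rewrite le_eqVlt => /orP[/eqP<-|]; auto.
- move: (r_eq0); rewrite vnormE => /eqP; rewrite sqrtr_eq0 => h.
  have : N2 v = 0 by apply/eqP; rewrite eq_le h N2_ge0.
  move/N2_eq0 => ->; by rewrite mulmx0 vnorm0 N2_0 sqrtr0 mulr0.
- have hw : vnorm ((vnorm v)^-1%:C *: v) <= 1.
    by rewrite vnormZ ger0_norm ?invr_ge0 // mulVf // gt_eqF.
  have := opnorm_ub A _ hw; rewrite -scalemxAr vnormZ ger0_norm ?invr_ge0 // => h.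
  have := ler_wpM2l r0 h; rewrite mulrA mulfV ?gt_eqF // mul1r mulrC //.
Qed.

Lemma two_ab (r a b : R) : 0 < r -> 2 * (a * b) <= r * a ^+ 2 + r^-1 * b ^+ 2.
Proof.
move=> r0.
have ri : 0 <= r^-1 by rewrite invr_ge0 ltW.
have h := mulr_ge0 ri (sqr_ge0 (r * a - b)).
have E : r^-1 * (r * a - b) ^+ 2 = r * a ^+ 2 - 2 * (a * b) + r^-1 * b ^+ 2.
  by field; rewrite gt_eqF.
lra.
Qed.

Lemma QA_le A y : complex.Re (Q A y y) <= opnorm A * N2 y.
Proof.
set S := opnorm A; set z := A *m y.
have S0 : 0 <= S := opnorm_ge0 A.
have hz : N2 z <= S ^+ 2 * N2 y.
  have := opnorm_scale A y; rewrite -/S -/z !vnormE => h.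
  rewrite -(sqr_sqrtr (N2_ge0 z)) -(sqr_sqrtr (N2_ge0 y)) -exprMn.
  apply: sq_le; rewrite ger0_norm //; exact: sqrtr_ge0.
have [S_eq0|S_gt0] : S = 0 \/ 0 < S.
  by move: S0; rewrite le_eqVlt => /orP[/eqP<-|]; auto.
- have : N2 z = 0.
    apply/eqP; rewrite eq_le N2_ge0 andbT; move: hz; rewrite S_eq0 expr0n /= mul0r //.
  move/N2_eq0 => z0.
  rewrite QE -/z z0 S_eq0 mul0r /ip big1 // => k _; rewrite mxE mulr0 //.
- rewrite QE -/z Re_ip.
  have h2 : 2 * \sum_(k < d) (complex.Re (y k 0) * complex.Re (z k 0) + complex.Im (y k 0) * complex.Im (z k 0))
      <= S * N2 y + S^-1 * N2 z.
    rewrite /N2 mulr_sumr !mulr_sumr -big_split /=; apply: ler_sum => k _.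
    have := two_ab S (complex.Re (y k 0)) (complex.Re (z k 0)) S_gt0.
    have := two_ab S (complex.Im (y k 0)) (complex.Im (z k 0)) S_gt0.
    lra.
  have h3 : S^-1 * N2 z <= S^-1 * (S ^+ 2 * N2 y).
    by apply: ler_wpM2l => //; rewrite invr_ge0.
  have E : S^-1 * (S ^+ 2 * N2 y) = S * N2 y by field; rewrite gt_eqF.
  lra.
Qed.

End Mx.
Arguments Q {R d}.
Arguments N2 {R d}.
Arguments ip {R d}.


Local Open Scope classical_set_scope.

Theorem lemma6p1 (R : realType) (n d : nat) (t : 'I_n -> R)
    (D : 'I_n -> 'M[R[i]]_d) (T1 Tinf : R) :
  (forall k, 0 <= t k) ->
  (forall k, psd (D k)) ->
  l1norm t <= T1 ->
  0 < Tinf -> linfnorm t <= Tinf ->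
  opnorm (\sum_(k < n) (t k)%:C *: D k) <=
    Tinf * sup [set opnorm (\sum_(k in I) D k) |
                I in [set I : {set 'I_n} | (#|I|%:Z <= Num.ceil (T1 / Tinf))%R]].
Proof.
move=> t0 psdD hl1 Tpos hlinf.
set S := sup _.
pose E := [set opnorm (\sum_(k in I) D k) |
                I in [set I : {set 'I_n} | (#|I|%:Z <= Num.ceil (T1 / Tinf))%R]].
have SE : S = sup E by [].
have l1_0 : 0 <= l1norm t by apply: sumr_ge0 => k _; apply: normr_ge0.
have m0 : (0 <= Num.ceil (T1 / Tinf))%R.
  rewrite ceil_ge0; apply: (@lt_le_trans _ _ 0); first by rewrite ltrN10.
  by apply: divr_ge0; [apply: le_trans hl1|apply: ltW].
have [mn hm] : exists mn : nat, Num.ceil (T1 / Tinf) = mn%:Z.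
  by exists `|Num.ceil (T1 / Tinf)|%N; rewrite gez0_abs.
have hubE : has_ubound E.
  exists (\sum_(I : {set 'I_n}) opnorm (\sum_(k in I) D k)) => y [I _ <-].
  rewrite (bigD1 I) //= lerDl; apply: sumr_ge0 => J _; exact: opnorm_ge0.
have SI : forall I : {set 'I_n}, (#|I| <= mn)%N -> opnorm (\sum_(k in I) D k) <= S.
  move=> I hI; rewrite SE; apply: (ub_le_sup hubE); exists I => //=.
  by rewrite hm lez_nat.
have S0 : 0 <= S.
  apply: (le_trans (opnorm_ge0 _ _ (\sum_(k in finset.set0) D k))); apply: SI.
  by rewrite cards0.
set M := \sum_(k < n) (t k)%:C *: D k.
have hM : Defs.hermitian M.
  move=> i j; rewrite !summxE conj_sum; apply: eq_bigr => k _.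
  rewrite !mxE conjMc; congr (_ * _).
  by case: (psdD k) => hD _; rewrite hD.
have pos : forall y, 0 <= complex.Re (Q M y y).
  move=> y; rewrite QsumA Re_sum; apply: sumr_ge0 => k _.
  rewrite QZA ReMc; apply: mulr_ge0 => //; exact: psd_Re.
have bnd : forall y, complex.Re (Q M y y) <= (Tinf * S) * N2 y.
  move=> y.
  pose a k := complex.Re (Q (D k) y y).
  pose s k := t k / Tinf.
  have a0 : forall k, 0 <= a k by move=> k; exact: psd_Re.
  have s01 : forall k, 0 <= s k <= 1.
    move=> k; apply/andP; split; first by apply: divr_ge0 => //; apply: ltW.
    rewrite ler_pdivrMr // mul1r; apply: le_trans hlinf.
    rewrite -[t k]ger0_norm //.
    exact: (le_bigmax _ (fun i => `|t i|) k).
  have ssum : \sum_k s k <= mn%:R.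
    rewrite -mulr_suml.
    have -> : \sum_k t k = l1norm t by apply: eq_bigr => k _; rewrite ger0_norm.
    have -> : (mn%:R : R) = (Num.ceil (T1 / Tinf))%:~R by rewrite hm.
    apply: (le_trans _ (ceil_ge (T1 / Tinf))).
    by apply: ler_wpM2r => //; rewrite invr_ge0 ltW.
  have [I [hI hs]] := @greedy _ _ a s mn a0 s01 ssum.
  have E1 : complex.Re (Q M y y) = Tinf * \sum_k s k * a k.
    rewrite QsumA Re_sum mulr_sumr; apply: eq_bigr => k _.
    by rewrite QZA ReMc /s /a; field; rewrite gt_eqF.
  rewrite E1 -mulrA; apply: ler_wpM2l; first exact: ltW.
  apply: (le_trans hs).
  have -> : \sum_(k in I) a k = complex.Re (Q (\sum_(k in I) D k) y y).
    by rewrite QsumA Re_sum.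
  apply: (le_trans (QA_le _ _ _ y)); apply: ler_wpM2r; first exact: N2_ge0.
  exact: SI.
have l0 : 0 <= Tinf * S by apply: mulr_ge0 => //; apply: ltW.
apply: ge_sup.
  exists (vnorm (M *m 0)); exists 0 => //=.
  by rewrite vnorm0 ler01.
move=> _ [v hv <-].
have h := @step2 _ _ M (Tinf * S) v hM pos bnd l0.
rewrite vnormE -(ger0_norm l0) -sqrtr_sqr; apply: ler_wsqrtr.
apply: (le_trans h); rewrite -[X in _ <= X]mulr1; apply: ler_wpM2l.
  exact: sqr_ge0.
exact: N2_le1.
Qed.
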